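(* Let $\phi\in\mathbb{R}^K$ and define the objective $$V(\phi) = \mathbb{E}_{Z \sim p(Z;\phi)}\, \mathbb{E}\big[Y_i(Z, Z_0) \,\big|\, Z\big], \qquad p(Z;\phi)=\prod_{k=1}^K \mathrm{Bern}(z_k;\sigma(\phi_k)),$$ where $\sigma(x)=1/(1+e^{-x})$, $Z_0\in\{0,1\}^K$ is a fixed baseline product, and the inner expectation is over a random individual $i$ drawn from the population and over that individual's random choice. Let $u=(u_1,\dots,u_K) \sim \prod_{k=1}^K \mathrm{Unif}(0,1)$ and define $Z_1(u) = \mathbf{1}[u > \sigma(-\phi)]$ and $Z_2(u) = \mathbf{1}[u < \sigma(\phi)]$ (componentwise indicators, with $\sigma$ applied componentwise). Let $\mathcal{A}_i = \{Y_i(Z_1(u),Z_0) \neq Y_i(Z_2(u),Z_0)\}$ and let $p(\mathcal{A}_i)$ denote the probability of $\mathcal{A}_i$ (for the given $u$ and individual $i$). Then the random vector $$\tilde{g} = \big(2Y_i(Z_1(u), Z_2(u)) - 1\big)\Big(u-\tfrac12\Big)\, p(\mathcal{A}_i)$$ satisfies $\mathbb{E}[\tilde{g}] = \nabla_\phi V(\phi)$.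
   Context: Products are binary vectors in $\{0,1\}^K$. For individual $i$ and products $A,B$, the choice outcome $Y_i(A,B)\in\{0,1\}$ equals $1$ if individual $i$ chooses $A$ over $B$ and $0$ otherwise. Choices follow the random utility maximisation model: for individual $i$, product $Z$ has utility $V_i(Z)+\epsilon$, where $V_i:\{0,1\}^K\to\mathbb{R}$ is a deterministic representative utility (no parametric form assumed) and the noise terms are independent standard Gumbel random variables, drawn independently for each product in each comparison; the alternative with larger utility is chosen. Hence $P(Y_i(A,B)=1)=\frac{e^{V_i(A)}}{e^{V_i(A)}+e^{V_i(B)}}$ and outcomes of distinct paired comparisons by the same individual are independent. Indicators $\mathbf{1}[u>\sigma(-\phi)]$ etc. are taken componentwise, producing a vector in $\{0,1\}^K$; $u-\tfrac12$ is the vector $(u_k-\tfrac12)_k$. *)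

(* Defs.v *)
From HB Require Import structures.
From mathcomp Require Import all_boot all_order all_algebra.
From mathcomp Require Import all_classical all_reals all_analysis.
Set Implicit Arguments. Unset Strict Implicit. Unset Printing Implicit Defensive.
Import Order.TTheory GRing.Theory Num.Theory.
Local Open Scope classical_set_scope.
Local Open Scope ring_scope.

Section Defs.
Variable R : realType.

Definition Prod (K : nat) := {ffun 'I_K -> bool}.

Definition sigma (x : R) : R := 1 / (1 + expR (- x)).

Definition bern (p : R) (y : bool) : R := if y then p else 1 - p.

(* MNL / logit choice probability P(Y_i(A,B)=1) for representative utility v *)
Definition pchoice K (v : Prod K -> R) (A B : Prod K) : R :=
  expR (v A) / (expR (v A) + expR (v B)).

Definition pZ K (phi : 'I_K -> R) (Z : Prod K) : R :=
  \prod_(k < K) bern (sigma (phi k)) (Z k).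

Definition Vobj d (I : measurableType d) (mu : probability I R) K
    (Vi : I -> Prod K -> R) (Z0 : Prod K) (phi : 'I_K -> R) : R :=
  \sum_(Z : Prod K) pZ phi Z *
    Rintegral mu setT (fun i => \sum_(y : bool) (y%:R) * bern (pchoice (Vi i) Z Z0) y).

Definition Z1 K (phi : 'I_K -> R) (u : nat -> R) : Prod K :=
  [ffun k : 'I_K => sigma (- phi k) < u (nat_of_ord k)].
Definition Z2 K (phi : 'I_K -> R) (u : nat -> R) : Prod K :=
  [ffun k : 'I_K => u (nat_of_ord k) < sigma (phi k)].

(* p(A_i) = P(Y_i(Za,Z0) <> Y_i(Zb,Z0)) for fixed individual utility v.
   If Za = Zb the two comparisons are the same comparison (same random
   outcome), so the event is empty; otherwise they are distinct comparisons,
   hence independent Bernoulli outcomes. *)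
Definition pA K (v : Prod K -> R) (Z0 Za Zb : Prod K) : R :=
  if Za == Zb then 0 else
  \sum_(y1 : bool) \sum_(y2 : bool)
     (if y1 != y2 then bern (pchoice v Za Z0) y1 * bern (pchoice v Zb Z0) y2 else 0).

(* integral over the unit cube [0,1]^n w.r.t. Lebesgue measure, as iterated
   integrals over coordinates 0..n-1 of u : nat -> R (coordinates >= n unused) *)
Fixpoint cube_int (n : nat) (f : (nat -> R) -> R) : R :=
  match n with
  | 0 => f (fun _ => 0)
  | n'.+1 => Rintegral (@lebesgue_measure R) `[0, 1]
               (fun x => cube_int n' (fun u => f (fun j => if j == n' then x else u j)))
  end.

Definition Egtilde d (I : measurableType d) (mu : probability I R) K
    (Vi : I -> Prod K -> R) (Z0 : Prod K) (phi : 'I_K -> R) (k : 'I_K) : R :=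
  cube_int K (fun u =>
    Rintegral mu setT (fun i =>
      \sum_(y : bool) bern (pchoice (Vi i) (Z1 phi u) (Z2 phi u)) y *
        ((2 * y%:R - 1) * (u (nat_of_ord k) - 2^-1) * pA (Vi i) Z0 (Z1 phi u) (Z2 phi u)))).

End Defs.

(* Main.v *)
Require Import Defs.
From HB Require Import structures.
From mathcomp Require Import all_boot all_order all_algebra.
From mathcomp Require Import all_classical all_reals all_analysis.
From mathcomp Require Import ring lra.
Set Implicit Arguments. Unset Strict Implicit. Unset Printing Implicit Defensive.
Import Order.TTheory GRing.Theory Num.Theory.
Import numFieldNormedType.Exports.
Local Open Scope classical_set_scope.
Local Open Scope ring_scope.
Section S.
Variable R : realType.

Lemma sigma_gt0 (x : R) : 0 < sigma x.
Proof. by rewrite /sigma div1r invr_gt0 addr_gt0 // expR_gt0. Qed.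

Lemma sigma_lt1 (x : R) : sigma x < 1.
Proof. rewrite /sigma div1r invf_lt1 ?addr_gt0 ?expR_gt0 //. by rewrite ltrDl expR_gt0. Qed.

Lemma sigmaN (x : R) : sigma (- x) = 1 - sigma x.
Proof.
rewrite /sigma opprK.
have h1 : 1 + expR x != 0 by rewrite gt_eqF // addr_gt0 // expR_gt0.
have h2 : 1 + expR (- x) != 0 by rewrite gt_eqF // addr_gt0 // expR_gt0.
rewrite expRN in h2 *.
have h3 : expR x != 0 by rewrite gt_eqF // expR_gt0.
by field; rewrite h3 addrC h1.
Qed.

Lemma is_derive_sigma (t : R) : is_derive t 1 (@sigma R) (sigma t * (1 - sigma t)).
Proof.
have hf : 1 + expR (- t) != 0 by rewrite gt_eqF // addr_gt0 // expR_gt0.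
have e : (@sigma R) = (fun y => (1 + expR (- y))^-1).
  by apply/funext => y; rewrite /sigma div1r.
rewrite e.
have d1 : is_derive t 1 (fun y : R => 1 + expR (- y)) (- expR (- t)).
  have H := @is_derive1_comp R expR (fun y => - y) t (expR (- t)) (-1) (is_derive_expR _) (is_deriveNid _ _).
  have H2 : is_derive t 1 (fun y : R => expR (- y)) (- expR (- t)).
    rewrite mulrN1 in H. exact: H.
  have := is_deriveD (is_derive_cst (1:R) t 1) H2.
  by rewrite add0r.
have HV := (@is_deriveV R (fun y => 1 + expR (- y)) t _ 1 hf d1). apply: is_derive_eq.
have h3 : expR (- t) != 0 by rewrite gt_eqF // expR_gt0.
rewrite /sigma /GRing.scale /=. by by field.
Qed.
Notation leb := (@lebesgue_measure R).

Lemma int_sum d (T : measurableType d) (mu : {measure set T -> \bar R}) (D : set T)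
  (I : Type) (s : seq I) (f : I -> T -> R) : measurable D ->
  (forall i, mu.-integrable D (EFin \o f i)) ->
  mu.-integrable D (EFin \o (fun x => \sum_(i <- s) f i x)) /\
  Rintegral mu D (fun x => \sum_(i <- s) f i x) = \sum_(i <- s) Rintegral mu D (f i).
Proof.
move=> mD hi; elim: s => [|a s [IH1 IH2]].
  rewrite big_nil; under eq_Rintegral do rewrite big_nil.
  split; last by rewrite /Rintegral integral0.
  apply: (eq_integrable mD (cst 0%E)); first by move=> x _ /=; rewrite big_nil.
  exact: integrable0.
rewrite big_cons; under eq_Rintegral do rewrite big_cons.
split.
  apply: (eq_integrable mD ((EFin \o f a) \+ (EFin \o (fun x => (\sum_(i <- s) f i x)%R))))%E.
    by move=> x _ /=; rewrite big_cons EFinD.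
  exact: integrableD.
by rewrite RintegralD // IH2.
Qed.

Lemma int_scale d (T : measurableType d) (mu : {measure set T -> \bar R}) (D : set T)
  (k : R) (f : T -> R) : measurable D -> mu.-integrable D (EFin \o f) ->
  mu.-integrable D (EFin \o (fun x => k * f x)).
Proof.
move=> mD hf; apply: (eq_integrable mD (fun x => k%:E * (EFin \o f) x))%E; first by move=> x _ /=; rewrite EFinM.
exact: integrableZl.
Qed.

Lemma int_cst01 (r : R) : leb.-integrable `[0, 1] (EFin \o cst r).
Proof.
apply: continuous_compact_integrable; first exact: segment_compact.
by apply: continuous_subspaceT; exact: cst_continuous.
Qed.

Lemma cube_prod (K : nat) (A : finType) (c : A -> R) (h : A -> 'I_K -> R -> R) n :
  (n <= K)%N ->
  (forall a j, leb.-integrable `[0, 1] (EFin \o h a j)) ->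
  cube_int n (fun u => \sum_a c a * \prod_(j < K) h a j (u (nat_of_ord j))) =
  \sum_a c a * \prod_(j < K) (if (j < n)%N then Rintegral leb `[0, 1] (h a j) else h a j 0).
Proof.
elim: n c h => [|n IH] c h hn hint.
  by [].
pose n' : 'I_K := Ordinal hn.
rewrite /=.
transitivity (Rintegral leb `[0, 1] (fun x => \sum_a
   (c a * \prod_(j < K | j != n') (if (j < n)%N then Rintegral leb `[0, 1] (h a j) else h a j 0)) * h a n' x)).
  apply: eq_Rintegral => x _.
  have := IH c (fun a j y => h a j (if (nat_of_ord j == n) then x else y)) (ltnW hn).
  move=> ->; last first.
    move=> a j /=; case: eqP => _; last exact: hint.
    exact: int_cst01.
  apply: eq_bigr => a _; rewrite -mulrA; congr (_ * _).
  rewrite (bigD1 n') //= ltnn eqxx mulrC; congr (_ * _).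
  apply: eq_bigr => j hj.
  have hj' : (nat_of_ord j == n) = false.
    by apply/negbTE; move: hj; apply: contra => /eqP e; apply/eqP/val_inj.
  rewrite hj'; case: ifP => // _; congr Rintegral; apply/funext => y; by rewrite hj'.
have [_ H] := @int_sum _ _ leb `[0, 1] A (index_enum A) (fun a x => (c a * \prod_(j < K | j != n') (if (j < n)%N then Rintegral leb `[0, 1] (h a j) else h a j 0)) * h a n' x) (measurable_itv _) (fun a => @int_scale _ _ leb `[0, 1] _ _ (measurable_itv _) (hint a n')).
  rewrite H.
  apply: eq_bigr => a _.
  rewrite (@RintegralZl _ _ _ leb `[0, 1] (h a n') _ (measurable_itv _) (hint a n')).
  rewrite -mulrA; congr (_ * _).
  rewrite [RHS](bigD1 n') //= ltnSn mulrC; congr (_ * _).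
  apply: eq_bigr => j hj.
  have hj' : (nat_of_ord j == n) = false.
    by apply/negbTE; move: hj; apply: contra => /eqP e; apply/eqP/val_inj.
  by rewrite [(j < n.+1)%N]ltnS [(j <= n)%N]leq_eqVlt hj'.
Qed.

Lemma sigma_cont : continuous (@sigma R).
Proof.
move=> x; have [hd _] := is_derive_sigma x.
exact/differentiable_continuous/derivable1_diffP.
Qed.

Lemma pchoiceE K (v : Prod K -> R) A B : pchoice v A B = sigma (v A - v B).
Proof.
rewrite /pchoice /sigma opprB expRB.
have h1 : expR (v A) != 0 by rewrite gt_eqF // expR_gt0.
have h2 : expR (v B) != 0 by rewrite gt_eqF // expR_gt0.
have h3 : expR (v A) + expR (v B) != 0 by rewrite gt_eqF // addr_gt0 // expR_gt0.
by field; rewrite h1 h3.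
Qed.


Lemma pchoice_int d (I : measurableType d) (mu : probability I R) K
    (Vi : I -> Prod K -> R) (hVi : forall Z : Prod K, measurable_fun setT (fun i => Vi i Z)) A B :
  mu.-integrable setT (EFin \o (fun i => pchoice (Vi i) A B)).
Proof.
apply: measurable_bounded_integrable => //.
- have hP := probability_setT mu. apply: (@le_lt_trans _ _ 1%E); last exact: ltry. by rewrite -hP.
- under eq_fun do rewrite pchoiceE.
  apply: measurableT_comp; first exact: (measurable_realfun.continuous_measurable_fun sigma_cont).
  exact: measurable_realfun.measurable_funB.
- exists 1; split => // M hM x _ /=.
  rewrite pchoiceE ger0_norm; last exact/ltW/sigma_gt0.
  by apply: le_trans (ltW hM); exact/ltW/sigma_lt1.
Qed.

Lemma mnl_id K (v : Prod K -> R) (Z0 Za Zb : Prod K) (w : R) :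
  \sum_(y : bool) bern (pchoice v Za Zb) y * ((2 * y%:R - 1) * w * pA v Z0 Za Zb)
  = w * (pchoice v Za Z0 - pchoice v Zb Z0).
Proof.
rewrite /pA; case: eqP => [->|ne].
  by rewrite subrr !mulr0 big1 // => y _; rewrite !mulr0.
rewrite !big_bool /= /bern /pchoice.
have ha : 0 < expR (v Za) := expR_gt0 _.
have hb : 0 < expR (v Zb) := expR_gt0 _.
have hc : 0 < expR (v Z0) := expR_gt0 _.
set a := expR (v Za) in ha *; set b := expR (v Zb) in hb *; set c := expR (v Z0) in hc *.
have h1 : a + b != 0 by rewrite gt_eqF // addr_gt0.
have h2 : a + c != 0 by rewrite gt_eqF // addr_gt0.
have h3 : b + c != 0 by rewrite gt_eqF // addr_gt0.
by field; rewrite h1 h2 h3.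
Qed.

Lemma int_cc (g : R -> R) (a b : R) : continuous g -> leb.-integrable `[a, b] (EFin \o g).
Proof.
move=> cg; apply: continuous_compact_integrable; first exact: segment_compact.
exact: continuous_subspaceT.
Qed.

Lemma ftc (g F : R -> R) (a b : R) : a < b -> continuous g ->
  (forall x : R, is_derive x (1:R) F (g x)) -> Rintegral leb `[a, b] g = F b - F a.
Proof.
move=> ab cg dF.
have cF : continuous F.
  move=> x; have [hd _] := dF x.
  exact/differentiable_continuous/derivable1_diffP.
rewrite /Rintegral (@continuous_FTC2 R g F a b ab) //.
- by apply: continuous_subspaceT.
- split.
  + by move=> x _; have [hd _] := dF x.
  + exact/cvg_at_right_filter/cF.
  + exact/cvg_at_left_filter/cF.
- by move=> x _; rewrite derive1E; have [_ ->] := dF x.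
Qed.

Lemma int_patch (g : R -> R) (S : set R) : measurable S -> continuous g ->
  leb.-integrable `[0, 1] (EFin \o (g \_ S)).
Proof.
move=> mS cg; rewrite -restrict_EFin; apply/integrable_restrict => //.
apply: integrableS (int_cc 0 1 cg) => //.
  exact: measurableI.
Qed.

Section pieces.
Variables (g F : R -> R) (c : R).
Hypotheses (cg : continuous g) (dF : forall x : R, is_derive x (1:R) F (g x)).
Hypotheses (c0 : 0 < c) (c1 : c < 1).

Lemma piece_a : Rintegral leb `[0, 1] (g \_ `]c, +oo[) = F 1 - F c.
Proof.
rewrite -Rintegral_mkcondr.
have -> : `[0, 1] `&` `]c, +oo[ = [set` `]c, 1]] :> set R.
  apply/seteqP; split => x /=; rewrite !in_itv /= ?andbT.
    by move=> [/andP[h1 h2] h3]; rewrite h3 h2.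
  by move=> /andP[h1 h2]; rewrite h1 h2 andbT; split => //; rewrite ltW // (lt_trans c0 h1).
rewrite Rintegral_itv_obnd_cbnd; first exact: ftc.
apply: integrableS (int_cc c 1 cg) => //.
by apply: subset_itvr; rewrite bnd_simp.
Qed.


Lemma piece_b : Rintegral leb `[0, 1] (g \_ `]-oo, c]) = F c - F 0.
Proof.
rewrite -Rintegral_mkcondr.
have -> : `[0, 1] `&` `]-oo, c] = [set` `[0, c]] :> set R.
  apply/seteqP; split => x /=; rewrite !in_itv /= ?andbT.
    by move=> [/andP[h1 h2] h3]; rewrite h3 h1.
  by move=> /andP[h1 h2]; rewrite h1 h2 /=; split => //; rewrite (le_trans h2) // ltW.
exact: ftc.
Qed.

Lemma piece_c : Rintegral leb `[0, 1] (g \_ `]-oo, c[) = F c - F 0.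
Proof.
rewrite -Rintegral_mkcondr.
have -> : `[0, 1] `&` `]-oo, c[ = [set` `[0, c[] :> set R.
  apply/seteqP; split => x /=; rewrite !in_itv /= ?andbT.
    by move=> [/andP[h1 h2] h3]; rewrite h3 h1.
  by move=> /andP[h1 h2]; rewrite h1 h2 /=; split => //; rewrite ltW // (lt_trans h2).
rewrite Rintegral_itv_bndo_bndc; first exact: ftc.
apply: integrableS (int_cc 0 c cg) => //.
by apply: subset_itvl; rewrite bnd_simp.
Qed.

Lemma piece_d : Rintegral leb `[0, 1] (g \_ `[c, +oo[) = F 1 - F c.
Proof.
rewrite -Rintegral_mkcondr.
have -> : `[0, 1] `&` `[c, +oo[ = [set` `[c, 1]] :> set R.
  apply/seteqP; split => x /=; rewrite !in_itv /= ?andbT.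
    by move=> [/andP[h1 h2] h3]; rewrite h3 h2.
  by move=> /andP[h1 h2]; rewrite h1 h2 andbT; split => //; rewrite (le_trans _ h1) // ltW.
exact: ftc.
Qed.

End pieces.

Definition F1 (x : R) : R := 2^-1 * (x * x) - 2^-1 * x.
Definition g1 (x : R) : R := x - 2^-1.

Lemma dF1 (x : R) : is_derive x (1:R) F1 (g1 x).
Proof.
have H := is_deriveB (is_deriveZ (2^-1) (is_deriveM (is_derive_id x (1:R)) (is_derive_id x (1:R))))
   (is_deriveZ (2^-1) (is_derive_id x (1:R))).
have -> : F1 = (2^-1 \*: (id * id) - 2^-1 \*: id).
  by apply/funext => y; rewrite /F1 /=.
apply: is_derive_eq.
have e : forall a : R, a%:A = a by move=> a; rewrite /GRing.scale /= mulr1.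
have e2 : forall a b : R, a *: b = a * b by [].
rewrite /g1 !e e2. by by field.
Qed.

Lemma dF0 (x : R) : is_derive x (1:R) id (cst (1:R) x).
Proof. exact: is_derive_id. Qed.

Lemma g1_cont : continuous g1.
Proof. move=> x; have [hd _] := dF1 x; exact/differentiable_continuous/derivable1_diffP. Qed.

Definition gk K (k j : 'I_K) : R -> R := if j == k then g1 else cst 1.
Definition S1 K (phi : 'I_K -> R) (j : 'I_K) (b : bool) : set R :=
  if b then [set` `]sigma (- phi j), +oo[] else [set` `]-oo, sigma (- phi j)]].
Definition S2 K (phi : 'I_K -> R) (j : 'I_K) (b : bool) : set R :=
  if b then [set` `]-oo, sigma (phi j)[] else [set` `[sigma (phi j), +oo[].

Lemma gk_cont K (k j : 'I_K) : continuous (gk k j).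
Proof. rewrite /gk; case: ifP => _; [exact: g1_cont | exact: cst_continuous]. Qed.

Lemma patch_S1 K phi (k j : 'I_K) b x :
  (gk k j \_ (S1 phi j b)) x = gk k j x * ((sigma (- phi j) < x) == b)%:R.
Proof.
rewrite patchE /S1; case: b; rewrite mem_setE in_itv /= ?andbT.
  by case: ifP => _; rewrite ?mulr1 ?mulr0.
by rewrite leNgt; case: (sigma (- phi j) < x); rewrite /= ?mulr1 ?mulr0.
Qed.

Lemma patch_S2 K phi (k j : 'I_K) b x :
  (gk k j \_ (S2 phi j b)) x = gk k j x * ((x < sigma (phi j)) == b)%:R.
Proof.
rewrite patchE /S2; case: b; rewrite mem_setE in_itv /= ?andbT.
  by case: ifP => _; rewrite ?mulr1 ?mulr0.
by rewrite leNgt; case: (x < sigma (phi j)); rewrite /= ?mulr1 ?mulr0.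
Qed.

Lemma int_h1 K phi (k j : 'I_K) b :
  Rintegral (@lebesgue_measure R) `[0, 1] (gk k j \_ (S1 phi j b)) =
  if j == k then (if b then 1 else -1) * (sigma (phi j) * (1 - sigma (phi j)) / 2)
  else bern (sigma (phi j)) b.
Proof.
have c0 := sigma_gt0 (- phi j); have c1 := sigma_lt1 (- phi j).
rewrite /gk /S1 /bern; case: (j == k); case: b.
- rewrite (piece_a g1_cont dF1 c0 c1) /F1 sigmaN. by field.
- rewrite (piece_b g1_cont dF1 c0 c1) /F1 sigmaN. by field.
- rewrite (piece_a (@cst_continuous _ _ (1:R)) dF0 c0 c1) sigmaN /=. by ring.
- rewrite (piece_b (@cst_continuous _ _ (1:R)) dF0 c0 c1) sigmaN /=. by ring.
Qed.

Lemma int_h2 K phi (k j : 'I_K) b :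
  Rintegral (@lebesgue_measure R) `[0, 1] (gk k j \_ (S2 phi j b)) =
  if j == k then (if b then -1 else 1) * (sigma (phi j) * (1 - sigma (phi j)) / 2)
  else bern (sigma (phi j)) b.
Proof.
have c0 := sigma_gt0 (phi j); have c1 := sigma_lt1 (phi j).
rewrite /gk /S2 /bern; case: (j == k); case: b.
- rewrite (piece_c g1_cont dF1 c0 c1) /F1. by field.
- rewrite (piece_d g1_cont dF1 c0 c1) /F1. by field.
- rewrite (piece_c (@cst_continuous _ _ (1:R)) dF0 c0 c1) /=. by ring.
- rewrite (piece_d (@cst_continuous _ _ (1:R)) dF0 c0 c1) /=. by ring.
Qed.

Lemma inth1 K phi (k j : 'I_K) b : leb.-integrable `[0, 1] (EFin \o (gk k j \_ (S1 phi j b))).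
Proof. apply: int_patch; last exact: gk_cont. by rewrite /S1; case: b. Qed.

Lemma inth2 K phi (k j : 'I_K) b : leb.-integrable `[0, 1] (EFin \o (gk k j \_ (S2 phi j b))).
Proof. apply: int_patch; last exact: gk_cont. by rewrite /S2; case: b. Qed.


Lemma prod_ind K (Zc Z : Prod K) : \prod_(j < K) ((Zc j == Z j)%:R : R) = (Zc == Z)%:R.
Proof.
case: eqP => [->|ne].
  by rewrite big1 // => j _; rewrite eqxx.
have : [exists j, Zc j != Z j].
  rewrite -negb_forall; apply/negP => /forallP H; apply: ne; apply/ffunP => j; exact/eqP.
case/existsP => j hj.
by rewrite (bigD1 j) //= (negbTE hj) mul0r.
Qed.

Lemma sum_ind K (W : Prod K -> R) (Zc : Prod K) :
  \sum_(Z : Prod K) W Z * (Zc == Z)%:R = W Zc.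
Proof.
rewrite (bigD1 Zc) //= eqxx mulr1 big1 ?addr0 // => Z hZ.
by rewrite eq_sym (negbTE hZ) mulr0.
Qed.

Lemma prod_gk K (k : 'I_K) (u : nat -> R) :
  \prod_(j < K) gk k j (u (nat_of_ord j)) = u (nat_of_ord k) - 2^-1.
Proof.
rewrite (bigD1 k) //= big1 ?mulr1.
  by rewrite /gk eqxx.
by move=> j hj; rewrite /gk (negbTE hj).
Qed.


Lemma sum_pair (T : finType) (f : T * bool -> R) :
  \sum_(p : T * bool) f p = \sum_(t : T) (f (t, true) + f (t, false)).
Proof.
rewrite (eq_bigr (fun p => f (p.1, p.2))); last by case.
rewrite -(pair_big xpredT xpredT (fun a b => f (a, b))) /=.
by apply: eq_bigr => t _; rewrite big_bool.
Qed.

End S.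

Theorem lemma3 (R : realType) (K : nat) (d : measure_display)
    (I : measurableType d) (mu : probability I R)
    (Vi : I -> Prod K -> R) (Z0 : Prod K) (phi : 'I_K -> R)
    (hVi : forall Z : Prod K, measurable_fun setT (fun i => Vi i Z))
    (k : 'I_K) :
  is_derive (phi k) (1 : R)
    (fun t : R => Vobj mu Vi Z0 (fun j => if j == k then t else phi j))
    (Egtilde mu Vi Z0 phi k).
Proof.
pose W := fun Z : Prod K => Rintegral mu setT (fun i => pchoice (Vi i) Z Z0).
pose s := fun j => sigma (phi j).
pose Pm := fun Z : Prod K => \prod_(j < K | j != k) bern (s j) (Z j).
pose al := \sum_(Z : Prod K) (if Z k then Pm Z * W Z else - (Pm Z * W Z)).
pose be := \sum_(Z : Prod K) (if Z k then 0 else Pm Z * W Z).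
have hV : (fun t => Vobj mu Vi Z0 (fun j => if j == k then t else phi j)) =
          (fun t => sigma t * al + be).
  apply/funext => t; rewrite /Vobj.
  transitivity (\sum_(Z : Prod K) bern (sigma t) (Z k) * (Pm Z * W Z)).
    apply: eq_bigr => Z _.
    rewrite /pZ (bigD1 k) //= eqxx -mulrA; congr (_ * (_ * _)).
      by apply: eq_bigr => j hj; rewrite (negbTE hj).
    by apply: eq_Rintegral => i _; rewrite big_bool /= /bern mul1r mul0r addr0.
  rewrite /al /be mulr_sumr -big_split /=; apply: eq_bigr => Z _.
  by rewrite /bern; case: (Z k) => /=; ring.
rewrite hV.
have -> : (fun t => sigma t * al + be) = ((@sigma R) * cst al + cst be : R -> R).
  by apply/funext.
have HD := is_deriveD (is_deriveM (is_derive_sigma (phi k)) (is_derive_cst al (phi k) (1:R)))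
   (is_derive_cst be (phi k) (1:R)).
apply: is_derive_eq.
have e2 : forall a b : R, a *: b = a * b by [].
rewrite !e2 mulr0 add0r addr0 /=.
have hint : forall Z, mu.-integrable setT (EFin \o (fun i => pchoice (Vi i) Z Z0)).
  by move=> Z; exact: pchoice_int.
have inner : forall u : nat -> R,
  Rintegral mu setT (fun i =>
      \sum_(y : bool) bern (pchoice (Vi i) (Z1 phi u) (Z2 phi u)) y *
        ((2 * y%:R - 1) * (u (nat_of_ord k) - 2^-1) * pA (Vi i) Z0 (Z1 phi u) (Z2 phi u)))
  = (u (nat_of_ord k) - 2^-1) * (W (Z1 phi u) - W (Z2 phi u)).
  move=> u; under eq_Rintegral do rewrite mnl_id.
  rewrite RintegralZl //; last first.
    apply: (eq_integrable measurableT ((EFin \o (fun i => pchoice (Vi i) (Z1 phi u) Z0)) \- (EFin \o (fun i => pchoice (Vi i) (Z2 phi u) Z0)))%E).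
      by move=> x _ /=; rewrite EFinB.
    exact: integrableB.
  by rewrite RintegralB.
pose cc := fun p : Prod K * bool => if p.2 then W p.1 else - W p.1.
pose hh := fun (p : Prod K * bool) (j : 'I_K) =>
  if p.2 then gk k j \_ (S1 phi j (p.1 j)) else gk k j \_ (S2 phi j (p.1 j)).
rewrite /Egtilde.
have -> : (fun u : nat -> R => Rintegral mu setT (fun i =>
      \sum_(y : bool) bern (pchoice (Vi i) (Z1 phi u) (Z2 phi u)) y *
        ((2 * y%:R - 1) * (u (nat_of_ord k) - 2^-1) * pA (Vi i) Z0 (Z1 phi u) (Z2 phi u))))
  = (fun u => \sum_(p : Prod K * bool) cc p * \prod_(j < K) hh p j (u (nat_of_ord j))).
  apply/funext => u; rewrite inner sum_pair /cc /hh /=.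
  have E1 : forall Z : Prod K, \prod_(j < K) (gk k j \_ (S1 phi j (Z j))) (u (nat_of_ord j))
       = (Z1 phi u == Z)%:R * (u (nat_of_ord k) - 2^-1).
    move=> Z; under eq_bigr do rewrite patch_S1.
    rewrite big_split /= prod_gk mulrC; congr (_ * _).
    by rewrite -prod_ind; apply: eq_bigr => j _; rewrite /Z1 ffunE.
  have E2 : forall Z : Prod K, \prod_(j < K) (gk k j \_ (S2 phi j (Z j))) (u (nat_of_ord j))
       = (Z2 phi u == Z)%:R * (u (nat_of_ord k) - 2^-1).
    move=> Z; under eq_bigr do rewrite patch_S2.
    rewrite big_split /= prod_gk mulrC; congr (_ * _).
    by rewrite -prod_ind; apply: eq_bigr => j _; rewrite /Z2 ffunE.
  under eq_bigr do rewrite E1 E2.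
  transitivity ((\sum_(Z : Prod K) W Z * (Z1 phi u == Z)%:R) * (u (nat_of_ord k) - 2^-1)
     - (\sum_(Z : Prod K) W Z * (Z2 phi u == Z)%:R) * (u (nat_of_ord k) - 2^-1)).
    by rewrite !sum_ind; ring.
  rewrite !mulr_suml -sumrB; apply: eq_bigr => Z _; ring.
rewrite cube_prod //; last first.
  by move=> [Z b] j; rewrite /hh /=; case: b; [exact: inth1 | exact: inth2].
rewrite sum_pair /cc /hh /=.
have Q1 : forall Z : Prod K, \prod_(j < K) (if (j < K)%N then Rintegral (@lebesgue_measure R) `[0, 1] (gk k j \_ (S1 phi j (Z j))) else (gk k j \_ (S1 phi j (Z j))) 0)
   = ((if Z k then 1 else -1) * (s k * (1 - s k) / 2)) * Pm Z.
  move=> Z; rewrite (bigD1 k) //= ltn_ord int_h1 eqxx; congr (_ * _).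
  by apply: eq_bigr => j hj; rewrite ltn_ord int_h1 (negbTE hj).
have Q2 : forall Z : Prod K, \prod_(j < K) (if (j < K)%N then Rintegral (@lebesgue_measure R) `[0, 1] (gk k j \_ (S2 phi j (Z j))) else (gk k j \_ (S2 phi j (Z j))) 0)
   = ((if Z k then -1 else 1) * (s k * (1 - s k) / 2)) * Pm Z.
  move=> Z; rewrite (bigD1 k) //= ltn_ord int_h2 eqxx; congr (_ * _).
  by apply: eq_bigr => j hj; rewrite ltn_ord int_h2 (negbTE hj).
under eq_bigr do rewrite Q1 Q2.
rewrite /al mulr_suml; apply: eq_bigr => Z _.
rewrite /s; case: (Z k) => /=; by field.
Qed.
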